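(* For every $\lambda\in\mathcal{P}^+$, $$D\,m_\lambda=\big(\langle\lambda+\rho_g,\lambda+\rho_g\rangle-\langle\rho_g,\rho_g\rangle\big)m_\lambda+\frac{1}{|W_\lambda|}\sum_{\alpha\in R^+}\Big(g_\alpha\langle\lambda,\alpha\rangle\sum_{\ell=1}^{[\langle\lambda,\alpha^\vee\rangle/2]}|W_{\lambda-\ell\alpha}|\,|W^\alpha(\lambda-\ell\alpha)|\,m_{\lambda-\ell\alpha}\Big),$$ where $|W^\alpha(\lambda-\ell\alpha)|$ equals $1$ if $\ell=\langle\lambda,\alpha^\vee\rangle/2$ and $2$ otherwise.
   Context: $E$ is a real Euclidean space (inner product $\langle\cdot,\cdot\rangle$, dimension $N$) spanned by an irreducible, not necessarily reduced, root system $R$ with Weyl group $W$ and positive roots $R^+$; $\alpha^\vee=2\alpha/\langle\alpha,\alpha\rangle$. $\mathcal{P}$ is the weight lattice, $\mathcal{P}^+$ the dominant weights. Formal exponentials $e^\lambda$ ($\lambda\in\mathcal{P}$), $e^\lambda e^\mu=e^{\lambda+\mu}$, realized as functions $e^{i\langle\lambda,x\rangle}$; $m_\lambda=\sum_{\mu\in W(\lambda)}e^\mu$. For $x\in E$, $\partial_x$ is the derivation with $\partial_x e^\lambda=\langle\lambda,x\rangle e^\lambda$; $\partial_\alpha$ means $\partial_x$ with $x=\alpha$. Parameters $g_\alpha$ ($\alpha\in R$) are real numbers with $g_{w(\alpha)}=g_\alpha$ for all $w\in W$. The hypergeometric differential operator is $D=\sum_{j=1}^N\partial_{x_j}^2+\sum_{\alpha\in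 R^+}g_\alpha\frac{1+e^{-\alpha}}{1-e^{-\alpha}}\partial_\alpha$, with $x_1,\dots,x_N$ an orthonormal basis of $E$. $\rho_g=\frac12\sum_{\alpha\in R^+}g_\alpha\alpha$. $W_\mu=\{w\in W\mid w(\mu)=\mu\}$ is the stabilizer; $W^\alpha\subset W$ is the order-2 subgroup generated by the reflection $r_\alpha(x)=x-\langle x,\alpha^\vee\rangle\alpha$, and $W^\alpha(\mu)$ the $W^\alpha$-orbit of $\mu$. $[p]$ denotes the integral part of a nonnegative real number $p$. *)

(* Defs.v *)
From HB Require Import structures.
From mathcomp Require Import all_boot all_order all_algebra.
From mathcomp Require Import all_classical all_reals all_analysis.
From mathcomp Require Import complex finmap.

Set Implicit Arguments.
Unset Strict Implicit.
Unset Printing Implicit Defensive.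

Import Order.TTheory GRing.Theory Num.Theory.
Local Open Scope ring_scope.
Local Open Scope classical_set_scope.

Section RootData.
Variables (R : realType) (N : nat).
Local Notation E := 'rV[R]_N.

Definition dot (u v : E) : R := \sum_(i < N) u 0 i * v 0 i.

Definition obasis (j : 'I_N) : E := delta_mx 0 j.

Definition coroot (a : E) : E := (2 / dot a a) *: a.

(* reflection r_alpha(x) = x - <x, alpha^vee> alpha, acting on rows: x *m refl_mx a *)
Definition refl (a x : E) : E := x - dot x (coroot a) *: a.
Definition refl_mx (a : E) : 'M[R]_N := 1%:M - (coroot a)^T *m a.

(* (not necessarily reduced) root system spanning E *)
Definition is_root_system (Rs : seq E) : Prop :=
  [/\ uniq Rs, (0 : E) \notin Rs, (<<Rs>>%VS = fullv),
      (forall a b, a \in Rs -> b \in Rs -> refl a b \in Rs) &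
      (forall a b, a \in Rs -> b \in Rs -> dot b (coroot a) \is a Num.int)].

Definition irreducible_rs (Rs : seq E) : Prop :=
  forall S : pred E,
    (forall a b, a \in Rs -> b \in Rs -> S a -> ~~ S b -> dot a b = 0) ->
    all S Rs \/ all (predC S) Rs.

(* positive roots determined by a regular element v (<alpha, v> <> 0 for all roots) *)
Definition posroots (Rs : seq E) (v : E) : seq E := [seq a <- Rs | 0 < dot a v].

Definition weyl (Rs : seq E) : set 'M[R]_N :=
  [set w | exists s : seq E, all (fun a => a \in Rs) s /\
                          w = foldr (fun a M => refl_mx a *m M) 1%:M s].

Definition scard (A : set 'M[R]_N) : nat := size (enum_fset (fset_set A)).

Definition stab_card (Rs : seq E) (mu : E) : nat :=
  scard [set w | weyl Rs w /\ mu *m w = mu].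

Definition orbitW (Rs : seq E) (mu : E) : {fset E} :=
  fset_set [set mu *m w | w in weyl Rs].

Definition orbA_card (a mu : E) : nat := size (undup [:: mu; refl a mu]).

Definition is_weight (Rs : seq E) (l : E) : Prop :=
  forall a, a \in Rs -> dot l (coroot a) \is a Num.int.
Definition is_dominant (Rs : seq E) (v : E) (l : E) : Prop :=
  is_weight Rs l /\ forall a, a \in posroots Rs v -> 0 <= dot l (coroot a).

Definition rho_g (Rs : seq E) (v : E) (g : E -> R) : E :=
  2^-1 *: \sum_(a <- posroots Rs v) g a *: a.

(* formal exponentials realized as functions: e^mu(x) = exp(i <mu, x>) *)
Definition eexp (mu x : E) : R[i] := (cos (dot mu x) +i* sin (dot mu x))%C.

(* formal finite sums  sum c_k e^{mu_k}  (c_k real) and their realization *)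
Definition fsum := seq (R * E).
Definition ev (f : fsum) (x : E) : R[i] := \sum_(p <- f) (p.1)%:C%C * eexp p.2 x.

Definition fderiv (y : E) (f : fsum) : fsum := [seq (p.1 * dot p.2 y, p.2) | p <- f].

Definition mW (Rs : seq E) (mu : E) : fsum := [seq (1, nu) | nu <- enum_fset (orbitW Rs mu)].

Definition Dop (Rs : seq E) (v : E) (g : E -> R) (f : fsum) (x : E) : R[i] :=
  \sum_(j < N) ev (fderiv (obasis j) (fderiv (obasis j) f)) x
  + \sum_(a <- posroots Rs v)
      (g a)%:C%C * ((1 + eexp (- a) x) / (1 - eexp (- a) x)) * ev (fderiv a f) x.

End RootData.

(* Main.v *)
Require Import Defs.
From HB Require Import structures.
From mathcomp Require Import all_boot all_order all_algebra.
From mathcomp Require Import all_classical all_reals all_analysis.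
From mathcomp Require Import complex finmap.
From mathcomp Require Import ring lra zify.

Import Order.TTheory GRing.Theory Num.Theory.
Local Open Scope ring_scope.

Section Aux.
Set Implicit Arguments.
Unset Strict Implicit.
Unset Printing Implicit Defensive.


Section P1.
Variables (R : realType) (N : nat).
Local Notation E := 'rV[R]_N.
Implicit Types (u w a b : E).

Lemma dotE u w : dot u w = (u *m w^T) 0 0.
Proof. by rewrite /dot mxE; apply: eq_bigr => i _; rewrite mxE. Qed.

Lemma dotC u w : dot u w = dot w u.
Proof. by rewrite /dot; apply: eq_bigr => i _; rewrite mulrC. Qed.

Lemma dotDl u1 u2 w : dot (u1 + u2) w = dot u1 w + dot u2 w.
Proof. by rewrite /dot -big_split; apply: eq_bigr => i _; rewrite mxE mulrDl. Qed.

Lemma dotDr u w1 w2 : dot u (w1 + w2) = dot u w1 + dot u w2.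
Proof. by rewrite dotC dotDl !(dotC u). Qed.

Lemma dotZl k u w : dot (k *: u) w = k * dot u w.
Proof. by rewrite /dot mulr_sumr; apply: eq_bigr => i _; rewrite mxE mulrA. Qed.

Lemma dotZr k u w : dot u (k *: w) = k * dot u w.
Proof. by rewrite dotC dotZl dotC. Qed.

Lemma dotNl u w : dot (- u) w = - dot u w.
Proof. by rewrite -scaleN1r dotZl mulN1r. Qed.

Lemma dotNr u w : dot u (- w) = - dot u w.
Proof. by rewrite dotC dotNl dotC. Qed.

Lemma dotBl u1 u2 w : dot (u1 - u2) w = dot u1 w - dot u2 w.
Proof. by rewrite dotDl dotNl. Qed.

Lemma dotBr u w1 w2 : dot u (w1 - w2) = dot u w1 - dot u w2.
Proof. by rewrite dotDr dotNr. Qed.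

Lemma dot0l w : dot 0 w = 0.
Proof. by rewrite /dot big1 // => i _; rewrite mxE mul0r. Qed.

Lemma dot_sumr (I : Type) (r : seq I) (F : I -> E) u :
  dot u (\sum_(i <- r) F i) = \sum_(i <- r) dot u (F i).
Proof.
elim: r => [|i r IH]; first by rewrite !big_nil dotC dot0l.
by rewrite !big_cons dotDr IH.
Qed.

Lemma dot_mulmx u w (M : 'M[R]_N) : dot (u *m M) w = dot u (w *m M^T).
Proof. by rewrite !dotE trmx_mul trmxK mulmxA. Qed.

Lemma dot_eq0 u : (dot u u == 0) = (u == 0).
Proof.
apply/idP/idP => [|/eqP ->]; last by rewrite dot0l.
rewrite /dot psumr_eq0 => [/allP H|i _]; last exact: sqr_ge0.
apply/eqP/matrixP => i j; rewrite (ord1 i) mxE.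
have := H j (mem_index_enum _); rewrite /= mulf_eq0 orbb => /eqP //.
Qed.

Lemma dot_obasis u j : dot u (obasis R j) = u 0 j.
Proof.
rewrite /dot (bigD1 j) //= big1 => [|i ij]; rewrite /obasis mxE.
  by rewrite !eqxx mulr1 addr0.
by rewrite (negbTE ij) andbF mulr0.
Qed.

Lemma sum_obasis u : \sum_(j < N) dot u (obasis R j) * dot u (obasis R j) = dot u u.
Proof. by apply: eq_bigr => j _; rewrite dot_obasis. Qed.

Lemma coroot_dot a : a != 0 -> dot a (coroot a) = 2.
Proof.
move=> a0; rewrite /coroot dotZr divfK //; by rewrite dot_eq0.
Qed.

Lemma refl_mxE u a : u *m refl_mx a = refl a u.
Proof.
rewrite /refl_mx /refl mulmxBr mulmx1 mulmxA; congr (_ - _).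
by rewrite [u *m _]mx11_scalar mul_scalar_mx -dotE.
Qed.

Lemma refl_dot a u w : a != 0 -> dot (refl a u) (refl a w) = dot u w.
Proof.
move=> a0; have aa0 : dot a a != 0 by rewrite dot_eq0.
rewrite /refl /coroot !dotBl !dotBr !dotZl !dotZr ?dotZl ?dotZr.
rewrite (dotC w a); field; exact: aa0.
Qed.

Lemma refl_self a : a != 0 -> refl a a = - a.
Proof. by move=> a0; rewrite /refl coroot_dot // scaler_nat mulr2n opprD addrA subrr sub0r. Qed.

Lemma reflK a u : a != 0 -> refl a (refl a u) = u.
Proof.
move=> a0; rewrite {1}/refl dotBl dotZl coroot_dot // /refl.
set t := dot u (coroot a).
rewrite -[RHS]addr0 -addrA; congr (_ + _).
by rewrite -scaleNr -scalerBl; apply/eqP; rewrite scaler_eq0; apply/orP; left; apply/eqP; ring.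
Qed.

Lemma mx_ext (A B : 'M[R]_N) : (forall u : E, u *m A = u *m B) -> A = B.
Proof. by move=> H; apply/row_matrixP => i; rewrite !rowE H. Qed.

Lemma refl_mxK a : a != 0 -> refl_mx a *m refl_mx a = 1%:M.
Proof. by move=> a0; apply: mx_ext => u; rewrite mulmxA !refl_mxE reflK // mulmx1. Qed.

End P1.



Section P2.
Local Open Scope classical_set_scope.
Variables (R : realType) (N : nat).
Local Notation E := 'rV[R]_N.
Implicit Types (u a b : E).
Variable Rs : seq E.
Hypothesis hRs : is_root_system Rs.

Definition wprod (s : seq E) : 'M[R]_N := foldr (fun a M => refl_mx a *m M) 1%:M s.

Lemma root_neq0 a : a \in Rs -> a != 0.
Proof. by case: hRs => _ H0 _ _ _ aR; apply: contraNneq H0 => <-. Qed.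

Lemma wprod_cat s1 s2 : wprod (s1 ++ s2) = wprod s1 *m wprod s2.
Proof. by elim: s1 => [|a s IH] /=; rewrite ?mul1mx // IH mulmxA. Qed.

Lemma weyl1 : weyl Rs 1%:M.
Proof. by exists [::]. Qed.

Lemma weylM (w1 w2 : 'M[R]_N) : weyl Rs w1 -> weyl Rs w2 -> weyl Rs (w1 *m w2).
Proof.
move=> [s1 [h1 ->]] [s2 [h2 ->]]; exists (s1 ++ s2).
by rewrite all_cat h1 h2 -wprod_cat.
Qed.

Lemma weyl_refl a : a \in Rs -> weyl Rs (refl_mx a).
Proof. by move=> aR; exists [:: a]; rewrite /= aR mulmx1. Qed.

Lemma wprod_rcons s a : wprod (rcons s a) = wprod s *m refl_mx a.
Proof. by rewrite -cats1 wprod_cat /= mulmx1. Qed.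

Lemma weyl_inv (w : 'M[R]_N) : weyl Rs w ->
  exists w', [/\ weyl Rs w', w' *m w = 1%:M & w *m w' = 1%:M].
Proof.
move=> [s [hs ->]]; exists (wprod (rev s)).
have H : wprod (rev s) *m wprod s = 1%:M.
  elim: s hs => [|a s IH] /=; first by rewrite mulmx1.
  move=> /andP [aR hs]; rewrite rev_cons wprod_rcons -mulmxA (mulmxA (refl_mx a)).
  by rewrite refl_mxK ?root_neq0 // mul1mx IH.
split => //; last exact: mulmx1C.
by exists (rev s); rewrite all_rev.
Qed.

Lemma weyl_dot (w : 'M[R]_N) u u' : weyl Rs w -> dot (u *m w) (u' *m w) = dot u u'.
Proof.
move=> [s [hs ->]]; elim: s hs u u' => [|a s IH] /=; first by move=> _ u u'; rewrite !mulmx1.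
move=> /andP [aR hs] u u'; rewrite !mulmxA !refl_mxE IH //.
exact/refl_dot/root_neq0.
Qed.

Lemma weyl_root (w : 'M[R]_N) a : weyl Rs w -> a \in Rs -> a *m w \in Rs.
Proof.
move=> [s [hs ->]]; elim: s hs a => [|b s IH] /=; first by move=> _ a; rewrite mulmx1.
move=> /andP [bR hs] a aR; rewrite mulmxA refl_mxE IH //.
by case: hRs => _ _ _ H _; apply: H.
Qed.

Lemma weyl_injr (w : 'M[R]_N) : weyl Rs w -> injective (fun u : E => u *m w).
Proof.
move=> /weyl_inv [w' [_ _ h]] u1 u2 /= e.
by rewrite -(mulmx1 u1) -(mulmx1 u2) -h !mulmxA e.
Qed.

Lemma weyl_injMr (w : 'M[R]_N) : weyl Rs w -> injective (fun M : 'M[R]_N => M *m w).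
Proof.
move=> /weyl_inv [w' [_ _ h]] u1 u2 /= e.
by rewrite -(mulmx1 u1) -(mulmx1 u2) -h !mulmxA e.
Qed.

Lemma weyl_injMl (w : 'M[R]_N) : weyl Rs w -> injective (fun M : 'M[R]_N => w *m M).
Proof.
move=> /weyl_inv [w' [_ h _]] u1 u2 /= e.
by rewrite -(mul1mx u1) -(mul1mx u2) -h -!mulmxA e.
Qed.

Lemma span_ext (A B : 'M[R]_N) : {in Rs, forall a, a *m A = a *m B} -> A = B.
Proof.
move=> H; apply: mx_ext => u.
case: hRs => _ _ hspan _ _.
have : u \in <<in_tuple Rs>>%VS by rewrite /= hspan memvf.
move=> /coord_span ->.
rewrite !mulmx_suml; apply: eq_bigr => i _; rewrite -!scalemxAl H //.
exact: (mem_nth 0 (ltn_ord i)).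
Qed.

Definition phiW (M : 'M[R]_N) : seq E := map (fun a => a *m M) Rs.

Lemma phiW_inj : injective phiW.
Proof. by move=> A B /eq_in_map H; apply: span_ext. Qed.

Definition psiW (f : {ffun 'I_(size Rs).+1 -> 'I_(size Rs).+1}) : seq E :=
  mkseq (fun i => Rs`_(f (inord i))) (size Rs).

Lemma weyl_finite : finite_set (weyl Rs).
Proof.
pose T := [set s : seq E | all (fun a => a \in Rs) s /\ size s = size Rs].
have fT : finite_set T.
  apply: (@sub_finite_set _ _ (range psiW)); last first.
    by apply: finite_image; exact: finite_finset.
  move=> s [hs ss]; exists [ffun i : 'I_(size Rs).+1 => inord (index s`_i Rs)] => //.
  apply: (@eq_from_nth _ 0); first by rewrite size_mkseq ss.
  move=> i; rewrite size_mkseq => ilt; rewrite nth_mkseq // ffunE.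
  have hi : s`_i \in Rs by apply: (allP hs); rewrite mem_nth // ss.
  have e1 : (inord i : 'I_(size Rs).+1) = i :> nat by rewrite inordK // ltnS ltnW.
  have e2 : (inord (index s`_i Rs) : 'I_(size Rs).+1) = index s`_i Rs :> nat.
    by rewrite inordK // ltnS index_size.
  by rewrite e1 e2 nth_index.
have : finite_set (phiW @^-1` T).
  by apply: finite_preimage => // A B _ _; apply: phiW_inj.
apply: sub_finite_set => w hw; split; last by rewrite size_map.
by apply/allP => b /mapP [a aR ->]; apply: weyl_root.
Qed.

End P2.



Lemma sum_pred1_uniq (I : eqType) (V : zmodType) (r : seq I) (i : I) (F : I -> V) :
  uniq r -> i \in r -> \sum_(j <- r) (if i == j then F j else 0) = F i.
Proof.
move=> ur ir; rewrite -big_mkcond -big_filter.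
have -> : [seq j <- r | i == j] = [:: i].
  by rewrite -(filter_pred1_uniq ur ir); apply: eq_filter => j /=; rewrite eq_sym.
by rewrite big_seq1.
Qed.

Lemma sum_const_count (I : Type) (V : zmodType) (r : seq I) (P : pred I) (c : V) :
  \sum_(j <- r | P j) c = c *+ count P r.
Proof.
elim: r => [|j r IH]; first by rewrite big_nil.
by rewrite big_cons IH /=; case: (P j); rewrite ?mulrS ?add0n.
Qed.

Section P3.
Local Open Scope classical_set_scope.
Variables (R : realType) (N : nat).
Local Notation E := 'rV[R]_N.
Local Notation M := 'M[R]_N.
Implicit Types (u a b mu nu : E).
Variable Rs : seq E.
Hypothesis hRs : is_root_system Rs.

Definition Wl : seq M := enum_fset (fset_set (weyl Rs)).

Lemma memWl (A : M) : (A \in Wl) <-> weyl Rs A.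
Proof.
have e := in_fset_set (weyl_finite hRs) A.
split => h.
  by apply: set_mem; rewrite -e.
by have : A \in fset_set (weyl Rs) by rewrite e; apply: mem_set.

Qed.

Lemma uniq_Wl : uniq Wl.
Proof. exact: fset_uniq. Qed.

Lemma permWr (u : M) : weyl Rs u -> perm_eq Wl [seq A *m u | A <- Wl].
Proof.
move=> wu; apply: uniq_perm; first exact: uniq_Wl.
  rewrite map_inj_uniq ?uniq_Wl //; exact: (weyl_injMr hRs wu).
move=> A; apply/idP/idP.
  move=> /memWl wA; have [u' [wu' h1 h2]] := weyl_inv hRs wu.
  apply/mapP; exists (A *m u'); last by rewrite -mulmxA h1 mulmx1.
  by apply/memWl; apply: (weylM (Rs:=Rs)).
by move=> /mapP [B /memWl wB ->]; apply/memWl; apply: weylM.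
Qed.

Lemma permWl (u : M) : weyl Rs u -> perm_eq Wl [seq u *m A | A <- Wl].
Proof.
move=> wu; apply: uniq_perm; first exact: uniq_Wl.
  rewrite map_inj_uniq ?uniq_Wl //; exact: (weyl_injMl hRs wu).
move=> A; apply/idP/idP.
  move=> /memWl wA; have [u' [wu' h1 h2]] := weyl_inv hRs wu.
  apply/mapP; exists (u' *m A); last by rewrite mulmxA h2 mul1mx.
  by apply/memWl; apply: (weylM (Rs:=Rs)).
by move=> /mapP [B /memWl wB ->]; apply/memWl; apply: weylM.
Qed.

Lemma uniq_Rs : uniq Rs.
Proof. by case: hRs. Qed.

Lemma permRs (w : M) : weyl Rs w -> perm_eq Rs [seq a *m w | a <- Rs].
Proof.
move=> ww; apply: uniq_perm; first exact: uniq_Rs.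
  rewrite map_inj_uniq ?uniq_Rs //; exact: (weyl_injr hRs ww).
move=> a; apply/idP/idP.
  move=> aR; have [w' [ww' h1 h2]] := weyl_inv hRs ww.
  apply/mapP; exists (a *m w'); last by rewrite -mulmxA h1 mulmx1.
  exact: (weyl_root hRs).
by move=> /mapP [b bR ->]; apply: (weyl_root hRs).
Qed.

Definition Ol mu : seq E := enum_fset (orbitW Rs mu).

Lemma memOl mu nu : (nu \in Ol mu) <-> exists2 A, weyl Rs A & mu *m A = nu.
Proof.
have fin : finite_set [set mu *m w | w in weyl Rs].
  exact: finite_image (weyl_finite hRs).
have e := in_fset_set fin nu.
split => h.
  by have := set_mem (etrans (esym e) h).
by have : nu \in orbitW Rs mu by rewrite /orbitW e; apply: mem_set.

Qed.

Lemma uniq_Ol mu : uniq (Ol mu).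
Proof. exact: fset_uniq. Qed.

Lemma stab_count mu : stab_card Rs mu = count (fun A => mu *m A == mu) Wl.
Proof.
rewrite /stab_card /scard -size_filter.
have fin : finite_set [set w | weyl Rs w /\ mu *m w = mu].
  by apply: sub_finite_set (weyl_finite hRs) => w [].
apply: perm_size; apply: uniq_perm; first exact: fset_uniq.
  exact/filter_uniq/uniq_Wl.
move=> A; have e := in_fset_set fin A.
rewrite mem_filter; apply/idP/idP.
  move=> h; have [wA eA] := set_mem (etrans (esym e) h).
  by rewrite eA eqxx; apply/memWl.
move=> /andP [/eqP eA /memWl wA].
by have : A \in fset_set [set w | weyl Rs w /\ mu *m w = mu] by rewrite e; apply: mem_set.
Qed.

Lemma count_orbit mu nu : nu \in Ol mu ->
  count (fun A => mu *m A == nu) Wl = stab_card Rs mu.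
Proof.
move=> /memOl [B wB <-]; rewrite stab_count ((permP (permWr wB)) _) count_map.
apply: eq_count => A /=; rewrite mulmxA.
by apply/eqP/eqP => [/(weyl_injr hRs wB) | ->].
Qed.

Lemma orbit_stab (V : zmodType) (f : E -> V) mu :
  (\sum_(nu <- Ol mu) f nu) *+ stab_card Rs mu = \sum_(A <- Wl) f (mu *m A).
Proof.
have -> : \sum_(A <- Wl) f (mu *m A) =
    \sum_(A <- Wl) \sum_(nu <- Ol mu) (if mu *m A == nu then f nu else 0).
  apply: eq_big_seq => A /memWl wA; rewrite sum_pred1_uniq ?uniq_Ol //.
  by apply/memOl; exists A.
rewrite exchange_big /= -sumrMnl; apply: eq_big_seq => nu nuO.
by rewrite -big_mkcond /= sum_const_count count_orbit.
Qed.

End P3.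



Section P4.
Variables (R : realType) (N : nat).
Local Notation E := 'rV[R]_N.
Local Notation C := R[i].
Implicit Types (u a b mu nu x : E).

Lemma eexpD mu nu x : eexp (mu + nu) x = eexp mu x * eexp nu x.
Proof.
rewrite /eexp dotDl cosD sinD; apply/eqP; rewrite eq_complex /=.
by apply/andP; split; apply/eqP; ring.
Qed.

Lemma eexp0 x : eexp 0 x = 1.
Proof. by rewrite /eexp dot0l cos0 sin0. Qed.

Lemma eexpN mu x : eexp (- mu) x * eexp mu x = 1.
Proof. by rewrite -eexpD addNr eexp0. Qed.

Lemma eexp_neq0 mu x : eexp mu x != 0.
Proof. by apply/negP => /eqP h; have := eexpN mu x; rewrite h mulr0 => /eqP; rewrite eq_sym oner_eq0. Qed.

Lemma eexpZ mu b x (l : nat) :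
  eexp (mu - l%:R *: b) x = eexp mu x * eexp (- b) x ^+ l.
Proof.
elim: l mu => [|l IH] mu; first by rewrite scale0r subr0 expr0 mulr1.
by rewrite -natr1 scalerDl scale1r opprD addrA eexpD IH exprSr mulrA.
Qed.

Lemma ev_cons p f x : ev (p :: f) x = (p.1)%:C%C * eexp p.2 x + ev f x.
Proof. by rewrite /ev big_cons. Qed.

Lemma ev_mW (Rs : seq E) mu x : ev (mW Rs mu) x = \sum_(nu <- Ol Rs mu) eexp nu x.
Proof. by rewrite /ev /mW big_map; apply: eq_bigr => nu _; rewrite /= rmorph1 mul1r. Qed.

Lemma ev_fd_mW (Rs : seq E) mu y x : ev (fderiv y (mW Rs mu)) x =
  \sum_(nu <- Ol Rs mu) (dot nu y)%:C%C * eexp nu x.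
Proof. by rewrite /ev /fderiv /mW -map_comp big_map; apply: eq_bigr => nu _; rewrite /= mul1r. Qed.

Definition cf a x : C := (1 + eexp (- a) x) / (1 - eexp (- a) x).

Lemma Dop_mW (Rs : seq E) v (g : E -> R) mu x :
  Dop Rs v g (mW Rs mu) x =
    \sum_(nu <- Ol Rs mu) (dot nu nu)%:C%C * eexp nu x
  + \sum_(a <- posroots Rs v) (g a)%:C%C * cf a x *
      \sum_(nu <- Ol Rs mu) (dot nu a)%:C%C * eexp nu x.
Proof.
rewrite /Dop; congr (_ + _); last first.
  by apply: eq_bigr => a _; rewrite ev_fd_mW.
have -> : \sum_(j < N) ev (fderiv (obasis R j) (fderiv (obasis R j) (mW Rs mu))) x
   = \sum_(j < N) \sum_(nu <- Ol Rs mu)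
        (dot nu (obasis R j) * dot nu (obasis R j))%:C%C * eexp nu x.
  apply: eq_bigr => j _; rewrite /ev /fderiv /mW -!map_comp big_map.
  by apply: eq_bigr => nu _; rewrite /= mul1r.
rewrite exchange_big /=; apply: eq_bigr => nu _.
by rewrite -mulr_suml -rmorph_sum sum_obasis.
Qed.

End P4.



Lemma geom_id (F : fieldType) (q : F) (n : nat) : q != 1 -> (0 < n)%N ->
  (1 + q) / (1 - q) * (1 - q ^+ n) = 1 + q ^+ n + (\sum_(1 <= l < n) q ^+ l) *+ 2.
Proof.
move=> q1 n0.
have hq : 1 - q != 0 by rewrite subr_eq0 eq_sym.
have -> : 1 - q ^+ n = (1 - q) * \sum_(0 <= i < n) q ^+ i.
  by rewrite -opprB subrX1 -mulNr opprB big_mkord.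
rewrite mulrA divfK //.
case: n n0 => // m _.
have e1 : \sum_(1 <= l < m.+1) q ^+ l = \sum_(0 <= i < m) q ^+ i.+1.
  by rewrite big_add1.
rewrite e1 mulrDl mul1r mulr_sumr (big_nat_recl _ _ _ (leq0n m)) expr0.
have e2 : \sum_(0 <= i < m.+1) q * q ^+ i = \sum_(0 <= i < m) q ^+ i.+1 + q ^+ m.+1.
  by rewrite big_nat_recr //=; congr (_ + _); [apply: eq_bigr => i _|]; rewrite exprS.
rewrite e2; ring.
Qed.

Lemma sum_rev_tail (V : zmodType) (f : nat -> V) (m n : nat) : (m <= n)%N ->
  \sum_(m.+1 <= j < n) f j = \sum_(1 <= i < n - m) f (n - i)%N.
Proof.
move=> mn.
have -> : m.+1 = (1 + m)%N by rewrite add1n.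
rewrite big_addn big_nat_rev; apply: eq_big_nat => i /andP [h1 h2].
congr f; lia.
Qed.

Lemma fold_sum (V : zmodType) (f : nat -> V) (n : nat) :
  (forall l, (l <= n)%N -> f l = f (n - l)%N) ->
  \sum_(1 <= l < n) f l =
  \sum_(1 <= l < (n./2).+1) f l *+ (if l.*2 == n then 1 else 2).
Proof.
move=> hf.
case: n hf => [|n] hf; first by rewrite !big_geq.
set m := (n.+1)./2.
have hm : (m <= n.+1)%N by rewrite /m; lia.
have hm1 : (m.+1 <= n.+1)%N by rewrite /m; lia.
rewrite (@big_cat_nat _ _ _ m.+1) //=.
have -> : \sum_(1 <= l < m.+1) f l *+ (if l.*2 == n.+1 then 1 else 2) =
  \sum_(1 <= l < m.+1) f l +
  \sum_(1 <= l < m.+1) (if l.*2 == n.+1 then 0 else f (n.+1 - l)%N).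
  rewrite -big_split; apply: eq_big_nat => l /andP [l1 l2] /=.
  case: ifP => _; first by rewrite addr0 mulr1n.
  by rewrite mulr2n -hf //; lia.
congr (_ + _); rewrite sum_rev_tail //.
have hd := odd_double_half n.+1; rewrite -/m -muln2 in hd.
case: (boolP (odd n.+1)) => hodd.
  rewrite hodd /= in hd.
  have -> : (n.+1 - m = m.+1)%N by lia.
  apply: eq_big_nat => l /andP [l1 l2].
  by case: ifP => // /eqP h; have := congr1 odd h; rewrite odd_double hodd.
rewrite (negbTE hodd) /= in hd.
have e : (n.+1 = m.*2)%N by rewrite -muln2; lia.
have -> : (n.+1 - m = m)%N by rewrite e; lia.
have m1 : (1 <= m)%N by move: e; lia.
rewrite (big_nat_recr _ _ _ m1) /= e eqxx addr0.
apply: eq_big_nat => l /andP [l1 l2]; case: ifP => // /eqP h; lia.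
Qed.



Lemma trunc_half (R : realType) (n : nat) : Num.truncn ((n%:R : R) / 2) = n./2.
Proof.
apply: truncn_def.
have h : (n%:R : R) = (odd n)%:R + (n./2)%:R * 2.
  by rewrite -[2]/(2%:R) -natrM -natrD muln2 odd_double_half.
rewrite h; move: (n./2) => m; rewrite -natr1; set y : R := m%:R.
have e : (m.+1%:R : R) = y + 1 by rewrite -natr1.
have y0 : 0 <= y by rewrite /y ler0n.
have hc : (odd n)%:R = 0 :> R \/ (odd n)%:R = 1 :> R by case: (odd n); [right|left].
rewrite e -[1 + 1 : R]/(2%:R : R).
by case: hc => ->; apply/andP; split; lra.
Qed.

Lemma orbA_card_eq (R : realType) (N : nat) (b mu : 'rV[R]_N) (k : R) :
  b != 0 -> dot mu (coroot b) = k -> orbA_card b mu = if k == 0 then 1%N else 2%N.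
Proof.
move=> b0 hk; rewrite /orbA_card /refl hk /= inE.
have -> : (mu == mu - k *: b) = (k == 0).
  apply/eqP/eqP => [h|->]; last by rewrite scale0r subr0.
  have : (mu - k *: b) - mu = 0 by rewrite -h subrr.
  by rewrite addrAC subrr add0r => /eqP; rewrite oppr_eq0 scaler_eq0 (negbTE b0) orbF => /eqP.
by case: (k == 0).
Qed.

Section P6.
Variables (R : realType) (N : nat).
Local Notation E := 'rV[R]_N.
Local Notation M := 'M[R]_N.
Local Notation C := R[i].
Implicit Types (u a b mu nu : E).
Variables (Rs : seq E) (v : E) (g : E -> R) (x : E).
Hypothesis hRs : is_root_system Rs.
Hypothesis hv : forall a, a \in Rs -> dot a v != 0.
Hypothesis hg : forall w a, weyl Rs w -> a \in Rs -> g (a *m w) = g a.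
Hypothesis hx : forall a, a \in posroots Rs v -> eexp (- a) x != 1.

Local Notation P := (posroots Rs v).

Lemma neg_root a : a \in Rs -> - a \in Rs.
Proof.
move=> aR; rewrite -refl_self ?(root_neq0 hRs) //.
by case: hRs => _ _ _ H _; apply: H.
Qed.

Lemma g_neg a : a \in Rs -> g (- a) = g a.
Proof.
move=> aR; rewrite -refl_self ?(root_neq0 hRs) // -refl_mxE hg //.
exact: weyl_refl.
Qed.

Lemma memP a : (a \in P) = (a \in Rs) && (0 < dot a v).
Proof. by rewrite mem_filter andbC. Qed.

Lemma sum_even (V : zmodType) (H : E -> V) :
  (forall a, a \in Rs -> H (- a) = H a) ->
  \sum_(a <- Rs) H a = (\sum_(a <- P) H a) *+ 2.
Proof.
move=> hH; rewrite (bigID (fun a => 0 < dot a v)) /= big_filter mulr2n; congr (_ + _).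
rewrite -big_filter.
have pe : perm_eq [seq a <- Rs | ~~ (0 < dot a v)] [seq - a | a <- P].
  apply: uniq_perm.
  - exact/filter_uniq/(uniq_Rs hRs).
  - by rewrite map_inj_uniq ?filter_uniq ?(uniq_Rs hRs) //; exact: oppr_inj.
  move=> a; rewrite mem_filter; apply/idP/idP.
    move=> /andP [na aR]; apply/mapP; exists (- a); last by rewrite opprK.
    rewrite memP neg_root // dotNl oppr_gt0 /=.
    by rewrite lt_neqAle hv //= leNgt.
  move=> /mapP [b]; rewrite memP => /andP [bR bp] ->.
  by rewrite dotNl oppr_gt0 -leNgt ltW //= neg_root.
rewrite (perm_big _ pe) big_map.
transitivity (\sum_(a <- P) H a); last by rewrite big_filter.
apply: eq_big_seq => a.
by rewrite memP => /andP [aR _]; rewrite hH.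
Qed.


Lemma e_ne1 a : a \in Rs -> eexp (- a) x != 1.
Proof.
move=> aR; case: (boolP (0 < dot a v)) => pa; first by apply: hx; rewrite memP aR.
have hn : - a \in P.
  rewrite memP neg_root //= dotNl oppr_gt0 lt_neqAle hv //= leNgt //.
have := hx hn; rewrite opprK; apply: contra => /eqP h.
by have := eexpN a x; rewrite h mul1r => ->.
Qed.

Lemma cf_neg a : cf (- a) x = - cf a x.
Proof.
rewrite /cf opprK.
have e1 : eexp a x = (eexp (- a) x)^-1 by apply/esym/mulr1_eq; exact: eexpN.
rewrite e1; set q := eexp (- a) x.
have q0 : q != 0 by exact: eexp_neq0.
case: (eqVneq q 1) => [->|q1]; first by rewrite invr1 subrr !invr0 !mulr0 oppr0.
have h1 : 1 - q != 0 by rewrite subr_eq0 eq_sym.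
have h2 : 1 - q^-1 != 0.
  by rewrite subr_eq0 eq_sym invr_eq1.
field; by rewrite h1 q0 /= subr_eq0 q1.
Qed.

Definition T mu : C := \sum_(A <- Wl Rs) eexp (mu *m A) x.

Lemma T_weyl mu (B : M) : weyl Rs B -> T (mu *m B) = T mu.
Proof.
move=> wB; rewrite /T [RHS](perm_big _ (permWl hRs wB)) big_map.
by apply: eq_bigr => A _; rewrite mulmxA.
Qed.

Variable lam : E.

Definition S b : C := \sum_(A <- Wl Rs) cf (b *m A) x * eexp (lam *m A) x.

Lemma S_neg b : S (- b) = - S b.
Proof.
by rewrite /S -sumrN; apply: eq_bigr => A _; rewrite mulNmx cf_neg mulNr.
Qed.

Lemma step1 (A : M) : weyl Rs A ->
  (\sum_(a <- P) (g a)%:C%C * cf a x * ((dot (lam *m A) a)%:C%C * eexp (lam *m A) x)) *+ 2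
  = \sum_(b <- Rs) (g b * dot lam b)%:C%C * (cf (b *m A) x * eexp (lam *m A) x).
Proof.
move=> wA; rewrite -sum_even; last first.
  by move=> a aR; rewrite g_neg // cf_neg dotNr rmorphN; ring.
rewrite (perm_big _ (permRs hRs wA)) big_map; apply: eq_big_seq => b bR.
rewrite hg // -{2}(mulmx1 lam) -(weyl_dot hRs lam b wA) mulmx1 rmorphM; ring.
Qed.

Lemma MC :
  \sum_(a <- P) (g a)%:C%C * cf a x *
     \sum_(A <- Wl Rs) (dot (lam *m A) a)%:C%C * eexp (lam *m A) x
  = \sum_(b <- P) (g b * dot lam b)%:C%C * S b.
Proof.
apply: (@pmulrnI _ 2) => //=.
have -> : \sum_(a <- P) (g a)%:C%C * cf a x *
     \sum_(A <- Wl Rs) (dot (lam *m A) a)%:C%C * eexp (lam *m A) x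
  = \sum_(A <- Wl Rs) \sum_(a <- P)
      (g a)%:C%C * cf a x * ((dot (lam *m A) a)%:C%C * eexp (lam *m A) x).
  by rewrite exchange_big /=; apply: eq_bigr => a _; rewrite mulr_sumr.
rewrite -sumrMnl.
rewrite (eq_big_seq (fun A => \sum_(b <- Rs) (g b * dot lam b)%:C%C * (cf (b *m A) x * eexp (lam *m A) x))); last first.
  by move=> A /(memWl hRs) wA; rewrite step1.
rewrite exchange_big /= -sum_even; last first.
  by move=> b bR; rewrite S_neg g_neg // dotNr rmorphM rmorphN; ring.
by apply: eq_bigr => b _; rewrite /S mulr_sumr.
Qed.


Lemma refl_lam b (n : nat) : dot lam (coroot b) = n%:R ->
  lam *m refl_mx b = lam - n%:R *: b.
Proof. by move=> hn; rewrite refl_mxE /refl hn. Qed.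

Lemma eexp_lb b (A : M) (l : nat) :
  eexp ((lam - l%:R *: b) *m A) x = eexp (lam *m A) x * eexp (- (b *m A)) x ^+ l.
Proof. by rewrite mulmxBl -scalemxAl eexpZ. Qed.

Lemma S_eval b (n : nat) : b \in Rs -> dot lam (coroot b) = n%:R -> (0 < n)%N ->
  S b = T lam + \sum_(1 <= l < n) T (lam - l%:R *: b).
Proof.
move=> bR hn n0; apply: (@pmulrnI _ 2) => //=.
have wb := weyl_refl bR.
have eS : S b = - \sum_(A <- Wl Rs) cf (b *m A) x * eexp ((lam - n%:R *: b) *m A) x.
  rewrite {1}/S (perm_big _ (permWl hRs wb)) big_map -sumrN; apply: eq_bigr => A _.
  rewrite !mulmxA refl_mxE refl_self ?(root_neq0 hRs) // (refl_lam hn) mulNmx cf_neg.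
  by rewrite mulNr.
rewrite mulr2n {1}eS /S -sumrN -big_split /=.
rewrite (eq_big_seq (fun A => eexp (lam *m A) x + eexp ((lam - n%:R *: b) *m A) x
   + (\sum_(1 <= l < n) eexp ((lam - l%:R *: b) *m A) x) *+ 2)); last first.
  move=> A /(memWl hRs) wA.
  have bA : b *m A \in Rs by exact: weyl_root.
  rewrite addrC -mulrBr eexp_lb.
  set q := eexp (- (b *m A)) x; set e0 := eexp (lam *m A) x.
  have -> : e0 - e0 * q ^+ n = e0 * (1 - q ^+ n) by ring.
  rewrite mulrCA /cf -/q geom_id //; last exact: e_ne1.
  rewrite mulrDr mulrDr mulr1 mulrnAr mulr_sumr; congr (_ + _ + _ *+ 2).
  by apply: eq_bigr => l _; rewrite eexp_lb.
rewrite !big_split /= exchange_big /=.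
have -> : \sum_(i <- Wl Rs) eexp ((lam - n%:R *: b) *m i) x = T lam.
  by rewrite -(refl_lam hn) -/(T _) T_weyl.
by rewrite mulr2n /T; ring.
Qed.


Lemma dot_lb_coroot b (n l : nat) : b \in Rs -> dot lam (coroot b) = n%:R ->
  dot (lam - l%:R *: b) (coroot b) = n%:R - l%:R * 2.
Proof. by move=> bR hn; rewrite dotBl dotZl coroot_dot ?(root_neq0 hRs) // hn. Qed.

Lemma Sb_final b : b \in Rs -> dot lam (coroot b) \is a Num.int -> 0 <= dot lam (coroot b) ->
  (g b * dot lam b)%:C%C * S b = (g b * dot lam b)%:C%C * (T lam +
    \sum_(1 <= l < (Num.truncn (dot lam (coroot b) / 2)).+1)
       T (lam - l%:R *: b) *+ orbA_card b (lam - l%:R *: b)).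
Proof.
move=> bR hi hp.
have b0 := root_neq0 hRs bR.
have hn : dot lam (coroot b) = (Num.truncn (dot lam (coroot b)))%:R.
  by rewrite truncnK // natrEint hi hp.
move: hn; move: (Num.truncn _) => n hn.
rewrite hn trunc_half.
case: n hn => [|n] hn.
  have : dot lam b = 0.
    move: hn; rewrite /coroot dotZr => /eqP; rewrite mulf_eq0 => /orP [|/eqP //].
    by rewrite mulf_eq0 invr_eq0 dot_eq0 (negbTE b0) orbF pnatr_eq0.
  by move=> ->; rewrite mulr0 rmorph0 !mul0r.
rewrite (S_eval bR hn) //; congr (_ * (_ + _)).
rewrite (@fold_sum _ (fun l => T (lam - l%:R *: b))); last first.
  move=> l hl; rewrite -(T_weyl _ (weyl_refl bR)) refl_mxE /refl (dot_lb_coroot _ bR hn).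
  congr T; rewrite natrB // -addrA -opprD -scalerDl; congr (_ - _ *: _); ring.
apply: eq_big_nat => l _.
rewrite (orbA_card_eq b0 (dot_lb_coroot l bR hn)).
have -> : ((n.+1)%:R - l%:R * 2 == 0 :> R) = (l.*2 == n.+1).
  by rewrite subr_eq0 -[2]/(2%:R) -natrM eqr_nat muln2 eq_sym.
by [].
Qed.

End P6.

End Aux.

Theorem mainTheorem4 (R : realType) (N : nat) (Rs : seq 'rV[R]_N)
    (v : 'rV[R]_N) (g : 'rV[R]_N -> R) (lam x : 'rV[R]_N) :
  is_root_system Rs -> irreducible_rs Rs ->
  (forall a, a \in Rs -> dot a v != 0) ->
  (forall w a, weyl Rs w -> a \in Rs -> g (a *m w) = g a) ->
  is_dominant Rs v lam ->
  (forall a, a \in posroots Rs v -> eexp (- a) x != 1) ->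
  let rho := rho_g Rs v g in
  Dop Rs v g (mW Rs lam) x =
    (dot (lam + rho) (lam + rho) - dot rho rho)%:C%C * ev (mW Rs lam) x
    + ((stab_card Rs lam)%:R^-1)%:C%C *
      \sum_(a <- posroots Rs v)
        ((g a * dot lam a)%:C%C *
         \sum_(1 <= l < (Num.truncn (dot lam (coroot a) / 2)).+1)
           ((stab_card Rs (lam - l%:R *: a) * orbA_card a (lam - l%:R *: a))%:R
             * ev (mW Rs (lam - l%:R *: a)) x)).
Proof.
move=> hRs _ hv hg [hw hdp] hx rho.
set s := stab_card Rs lam.
have s0 : (0 < s)%N.
  rewrite /s (stab_count hRs) -has_count; apply/hasP; exists 1%:M; last by rewrite mulmx1.
  by apply/(memWl hRs); exact: weyl1.
have sC : (s%:R : R[i]) != 0 by rewrite pnatr_eq0 -lt0n.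
apply: (mulfI sC).
rewrite Dop_mW mulrDr.
have L1 : s%:R * \sum_(nu <- Ol Rs lam) (dot nu nu)%:C%C * eexp nu x
    = (dot lam lam)%:C%C * T Rs x lam.
  rewrite mulr_natl (orbit_stab hRs (fun nu => (dot nu nu)%:C%C * eexp nu x)) /T.
  rewrite mulr_sumr; apply: eq_big_seq => A /(memWl hRs) wA.
  by rewrite (weyl_dot hRs _ _ wA).
have L2 : s%:R * \sum_(a <- posroots Rs v) (g a)%:C%C * cf a x *
      \sum_(nu <- Ol Rs lam) (dot nu a)%:C%C * eexp nu x
    = \sum_(a <- posroots Rs v) (g a)%:C%C * cf a x *
      \sum_(A <- Wl Rs) (dot (lam *m A) a)%:C%C * eexp (lam *m A) x.
  rewrite mulr_sumr; apply: eq_bigr => a _; rewrite mulrCA mulr_natl.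
  by rewrite (orbit_stab hRs (fun nu => (dot nu a)%:C%C * eexp nu x)).
rewrite L1 L2 (MC x hRs hv hg lam).
have hsinv : (s%:R : R[i]) * ((s%:R^-1 : R)%:C%C) = 1.
  by rewrite fmorphV rmorph_nat mulfV.
rewrite mulrDr [X in _ = _ + X]mulrA hsinv mul1r mulrCA.
have -> : s%:R * ev (mW Rs lam) x = T Rs x lam.
  by rewrite ev_mW mulr_natl (orbit_stab hRs (fun nu => eexp nu x)).
have hrho : dot (lam + rho) (lam + rho) - dot rho rho
    = dot lam lam + \sum_(a <- posroots Rs v) g a * dot lam a.
  rewrite !dotDl !dotDr (dotC rho lam).
  have -> : dot lam rho = 2^-1 * \sum_(a <- posroots Rs v) g a * dot lam a.
    rewrite /rho /rho_g dotZr dot_sumr; congr (_ * _); apply: eq_bigr => a _.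
    by rewrite dotZr.
  by field.
rewrite hrho.
under [X in _ = _ + X]eq_bigr => a _.
  rewrite (eq_big_nat _ _ (F2 := fun l => T Rs x (lam - l%:R *: a) *+ orbA_card a (lam - l%:R *: a))); last first.
    move=> l _.
    rewrite mulr_natl mulrnA ev_mW.
    by rewrite (orbit_stab hRs (fun nu => eexp nu x)) /T.
  over.
have -> : \sum_(b <- posroots Rs v) (g b * dot lam b)%:C%C * S Rs x lam b
  = \sum_(b <- posroots Rs v) (g b * dot lam b)%:C%C * (T Rs x lam +
    \sum_(1 <= l < (Num.truncn (dot lam (coroot b) / 2)).+1)
       T Rs x (lam - l%:R *: b) *+ orbA_card b (lam - l%:R *: b)).
  apply: eq_big_seq => b hb.
  have bR : b \in Rs by move: hb; rewrite mem_filter => /andP [].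
  by rewrite (Sb_final g hRs hv hx bR) ?hw ?hdp.
under [in LHS]eq_bigr => b _ do rewrite mulrDr.
rewrite big_split /= addrA; congr (_ + _).
by rewrite rmorphD mulrDl; congr (_ + _); rewrite [in RHS]rmorph_sum mulr_suml.
Qed.
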